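(* Let $\Gamma=(N,A,u)$ be a game with $N=\{1,\dots,n\}$ and $A_i=A_j$ for all $i,j\in N$. Then $\Gamma$ is VNM symmetric if and only if for each transposition $\pi\in S_N$ we have $u_i(s_1,\dots,s_n)=u_{\pi(i)}(s_{\pi(1)},\dots,s_{\pi(n)})$ for all $i\in N$ and $(s_1,\dots,s_n)\in A$.
   Context: A (finite normal-form) game $\Gamma=(N,A,u)$ consists of a finite set $N$ of at least two players, a finite non-empty strategy set $A_i$ for each $i\in N$, $A=\times_{i\in N}A_i$, and utility functions $u_i:A\to\mathbb{R}$. $\Gamma$ is VNM symmetric if $A_i=A_j$ for all $i,j\in N$ and, for each permutation $\pi\in S_N$, $u_{\pi(i)}(s_1,\dots,s_n)=u_i(s_{\pi(1)},\dots,s_{\pi(n)})$ for all $i\in N$ and $(s_1,\dots,s_n)\in A$. *)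

(* Defs.v *)
From HB Require Import structures.
From mathcomp Require Import all_boot all_order all_algebra all_fingroup.
From mathcomp Require Import reals.
Set Implicit Arguments. Unset Strict Implicit. Unset Printing Implicit Defensive.

(* Players N = 'I_n (i.e. {0,...,n-1}, standing for {1,...,n}).
   Common strategy set A_i = S for all i, a finite type.
   A strategy profile is a finite function 'I_n -> S, i.e. an element of A. *)
Definition profile (n : nat) (S : finType) := {ffun 'I_n -> S}.

Definition perm_profile (n : nat) (S : finType) (pi : 'S_n) (s : profile n S)
  : profile n S := [ffun j => s (pi j)].

Definition VNM_symmetric (R : realType) (n : nat) (S : finType)
  (u : 'I_n -> profile n S -> R) : Prop :=
  forall (pi : 'S_n) (i : 'I_n) (s : profile n S),
    u (pi i) s = u i (perm_profile pi s).

Definition is_transposition (n : nat) (pi : 'S_n) : Prop :=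
  exists a b : 'I_n, a != b /\ pi = tperm a b.

(* Main.v *)
Require Import Defs.
From HB Require Import structures.
From mathcomp Require Import all_boot all_order all_algebra all_fingroup.
From mathcomp Require Import reals.

Theorem mainTheorem17 (R : realType) (n : nat) (S : finType)
  (hn : (2 <= n)%N) (s0 : S) (u : 'I_n -> profile n S -> R) :
  VNM_symmetric u <->
  (forall pi : 'S_n, is_transposition pi ->
     forall (i : 'I_n) (s : profile n S),
       u i s = u (pi i) (perm_profile pi s)).
Proof.
split.
  move=> H pi [a [b [ab ->]]] i s.
  by rewrite -H tpermK.
move=> H.
pose P (p : 'S_n) := forall i s, u (p i) s = u i (perm_profile p s).
have Hc : forall p q, P p -> P q -> P (p * q)%g.
  move=> p q Hp Hq i s; rewrite permM Hq Hp; congr (u i _).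
  by apply/ffunP => j; rewrite !ffunE permM.
have Ht : forall a b : 'I_n, P (tperm a b).
  move=> a b i s; case: (eqVneq a b) => [<-|ab].
    have e : forall x, tperm a a x = x by move=> x; case: tpermP.
    rewrite e; congr (u i _); apply/ffunP => j.
    by rewrite !ffunE e.
  have := H (tperm a b) (ex_intro _ a (ex_intro _ b (conj ab erefl))) (tperm a b i) s.
  by rewrite tpermK.
move=> pi; case: (prod_tpermP pi) => ts -> _.
elim: ts => [|t ts IH].
  rewrite big_nil => i s; rewrite perm1; congr (u i _).
  by apply/ffunP => j; rewrite !ffunE perm1.
by rewrite big_cons; apply: Hc.
Qed.
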